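(* Let $1<n\leq\infty$. Then there is $g\in L_\infty(\Omega_n)$ with $\mathrm{Diam}(g(\Omega_n))=1$ and $\widetilde\Lambda_n=\sup_{z\in\mathbb{C}}\frac{1}{\|g-z\|_1}$.
   Context: For $n\in\mathbb{N}$, $(\Omega_n,\mu_n)$ is $\{1,\dots,n\}$ with normalized counting measure; $(\Omega_\infty,\mu_\infty)$ is $[0,1]$ with Lebesgue measure; $\|\cdot\|_1$ is the $L_1(\Omega_n,\mu_n)$-norm; $\mathrm{Diam}(A)=\sup_{z,w\in A}|z-w|$. For $n>1$: $\widetilde\Lambda_n=2$ if $n\in\{2,4\}$; $\widetilde\Lambda_n=\sqrt3$ if $n=3k$ ($k\in\mathbb{N}$) or $n=\infty$; $\widetilde\Lambda_n=\frac{2\sqrt3}{\sqrt{\frac{3k-3}{3k+1}}+\frac{3k+3}{3k+1}}$ if $n=3k+1\neq4$; $\widetilde\Lambda_n=\frac{2\sqrt3}{\sqrt{\frac{3k+6}{3k+2}}+\frac{3k}{3k+2}}$ if $n=3k+2$ ($k\in\mathbb{N}$). *)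

(* Defs.v *)
From HB Require Import structures.
From mathcomp Require Import all_boot all_order all_algebra.
From mathcomp Require Import all_classical all_reals all_analysis.
From mathcomp Require Import complex.
Set Implicit Arguments. Unset Strict Implicit. Unset Printing Implicit Defensive.
Import Order.TTheory GRing.Theory Num.Theory.
Local Open Scope classical_set_scope.
Local Open Scope ring_scope.

Definition cmod {R : realType} (z : R[i]) : R :=
  Num.sqrt (complex.Re z ^+ 2 + complex.Im z ^+ 2).

Definition Diam {R : realType} (A : set R[i]) : \bar R :=
  ereal_sup [set (cmod (z - w))%:E | z in A & w in A].

(* ---------- finite case: Omega_n = {1..n} (= 'I_n), normalized counting measure *)
Definition L1norm_fin {R : realType} (n : nat) (f : 'I_n -> R[i]) : R :=
  (n%:R)^-1 * \sum_(i < n) cmod (f i).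

(* ---------- case n = infinity: Omega_oo = [0,1] with Lebesgue measure *)
Definition Omega_inf {R : realType} : set R := `[0%R, 1%R].

Definition cmeasurable {R : realType} (g : R -> R[i]) : Prop :=
  measurable_fun Omega_inf (fun x => complex.Re (g x)) /\
  measurable_fun Omega_inf (fun x => complex.Im (g x)).

Definition in_Linf {R : realType} (g : R -> R[i]) : Prop :=
  cmeasurable g /\
  exists M : R, {ae (@lebesgue_measure R), forall x, Omega_inf x -> cmod (g x) <= M}.

Definition L1norm_inf {R : realType} (f : R -> R[i]) : \bar R :=
  (\int[@lebesgue_measure R]_(x in Omega_inf) (cmod (f x))%:E)%E.

(* essential range of g on [0,1]: g(Omega_oo) for an L_infty class *)
Definition ess_range {R : realType} (g : R -> R[i]) : set R[i] :=
  [set z | forall e : R, 0 < e ->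
     Order.lt (0%E : \bar R) (@lebesgue_measure R [set x | Omega_inf x /\ cmod (g x - z) < e])].

Definition LambdaT_fin {R : realType} (n : nat) : R :=
  let k := (n %/ 3)%N in
  let s3 := Num.sqrt (3 : R) in
  if (n == 2)%N || (n == 4)%N then 2
  else if (n %% 3 == 0)%N then s3
  else if (n %% 3 == 1)%N then
    2 * s3 / (Num.sqrt ((3 * k%:R - 3) / (3 * k%:R + 1)) + (3 * k%:R + 3) / (3 * k%:R + 1))
  else
    2 * s3 / (Num.sqrt ((3 * k%:R + 6) / (3 * k%:R + 2)) + (3 * k%:R) / (3 * k%:R + 2)).

Definition LambdaT_inf {R : realType} : R := Num.sqrt 3.

(* Main.v *)
Require Import Defs.
From HB Require Import structures.
From mathcomp Require Import all_boot all_order all_algebra.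
From mathcomp Require Import all_classical all_reals all_analysis.
From mathcomp Require Import complex.
From mathcomp Require Import ring lra zify.
Import Order.TTheory GRing.Theory Num.Theory.
Local Open Scope classical_set_scope.
Local Open Scope ring_scope.
Section Core.
Variable R : realType.

Lemma cmodB (a b c d : R) :
  cmod ((a +i* b)%C - (c +i* d)%C) = Num.sqrt ((a - c)^+2 + (b - d)^+2).
Proof. by []. Qed.

Lemma le_sqrt_of (x y : R) : 0 <= y -> x ^+ 2 <= y -> x <= Num.sqrt y.
Proof.
move=> y0 h; have s0 := sqrtr_ge0 y; have ss := sqr_sqrtr y0.
case: (lerP x (Num.sqrt y)) => // hx; nra.
Qed.

Lemma sq_le (a b : R) : 0 <= b -> a^+2 <= b^+2 -> a <= b.
Proof. move=> b0 h; case: (lerP a b) => // hab; nra. Qed.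

Lemma eq_sqrt_of (x y : R) : 0 <= x -> x ^+ 2 = y -> Num.sqrt y = x.
Proof. by move=> x0 <-; rewrite sqrtr_sqr ger0_norm. Qed.

Lemma unit_ineq (c a b p q : R) : 0 <= c -> a^+2 + b^+2 = c^+2 ->
  a * p + b * q <= c * Num.sqrt (p^+2 + q^+2).
Proof.
move=> c0 h.
have -> : c * Num.sqrt (p^+2 + q^+2) = Num.sqrt ((c * p)^+2 + (c * q)^+2).
  rewrite -{1}(ger0_norm c0) -sqrtr_sqr -sqrtrM ?sqr_ge0 //; congr Num.sqrt; ring.
apply: le_sqrt_of; first by nra.
have e : (c * p)^+2 + (c * q)^+2 - (a * p + b * q)^+2 = (a * q - b * p)^+2.
  have -> : (c * p)^+2 + (c * q)^+2 = (a^+2 + b^+2) * (p^+2 + q^+2) by rewrite h; ring.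
  ring.
have := sqr_ge0 (a * q - b * p); lra.
Qed.

Definition r3 : R := Num.sqrt 3.
Lemma r3sq : r3 ^+ 2 = 3. Proof. by rewrite sqr_sqrtr. Qed.
Lemma r3pos : 0 < r3. Proof. by rewrite sqrtr_gt0. Qed.

Definition vA : R[i] := (0 +i* 0)%C.
Definition vB : R[i] := (1 +i* 0)%C.
Definition vC : R[i] := (2^-1 +i* (r3 / 2))%C.

Definition FF (P Q : R) (z : R[i]) : R :=
  P * cmod (vA - z) + P * cmod (vB - z) + Q * cmod (vC - z).

Definition mm (P Q : R) : R := Num.sqrt (4 * P^+2 - Q^+2) / 2 + Q * r3 / 2.

Lemma FF_lb (P Q : R) z : 0 < P -> 0 <= Q -> Q^+2 <= 3 * P^+2 -> mm P Q <= FF P Q z.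
Proof.
move=> P0 Q0 PQ; case: z => x y.
rewrite /FF /mm /vA /vB /vC !cmodB.
set S := Num.sqrt (4 * P^+2 - Q^+2).
have S0 : 0 <= S := sqrtr_ge0 _.
have SS : S^+2 = 4 * P^+2 - Q^+2 by rewrite sqr_sqrtr //; nra.
have h1 := @unit_ineq (2 * P) S Q (x - 0) (y - 0).
have h2 := @unit_ineq (2 * P) (- S) Q (x - 1) (y - 0).
have h3 := @unit_ineq 2 0 (-2) (x - 2^-1) (y - r3/2).
have e1 : S^+2 + Q^+2 = (2 * P)^+2 by rewrite SS; ring.
have e2 : (- S)^+2 + Q^+2 = (2 * P)^+2 by rewrite sqrrN SS; ring.
have e3 : (0:R)^+2 + (-2)^+2 = 2^+2 by ring.
have {h1} := h1 ltac:(lra) e1.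
have {h2} := h2 ltac:(lra) e2.
have {h3} := h3 ltac:(lra) e3.
have sq : forall u v : R, (u - v)^+2 = (v - u)^+2 by move=> u v; ring.
rewrite !(sq x) !(sq y).
set a := Num.sqrt _; set b := Num.sqrt _; set c := Num.sqrt _.
have r3p := r3pos.
move=> h3 h2 h1; nra.
Qed.

Lemma FF_eq (P Q : R) : 0 < P -> 0 <= Q -> Q^+2 <= 3 * P^+2 ->
  FF P Q (2^-1 +i* (Q / (2 * Num.sqrt (4 * P^+2 - Q^+2))))%C = mm P Q.
Proof.
move=> P0 Q0 PQ.
rewrite /FF /mm /vA /vB /vC !cmodB.
set S := Num.sqrt (4 * P^+2 - Q^+2).
have S0 : 0 < S by rewrite sqrtr_gt0; nra.
have SS : S^+2 = 4 * P^+2 - Q^+2 by rewrite sqr_sqrtr //; nra.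
have r3p := r3pos; have r3s := r3sq.
have SSp : 0 < 4 * P^+2 - Q^+2 by nra.
have ea : Num.sqrt ((0 - 2^-1)^+2 + (0 - Q / (2 * S))^+2) = P / S.
  apply: eq_sqrt_of; first by apply: divr_ge0; lra.
  have -> : (0 - 2^-1)^+2 + (0 - Q / (2 * S))^+2 = (S^+2 + Q^+2) / (4 * S^+2) by field; lra.
  rewrite expr_div_n SS; field; lra.
have eb : Num.sqrt ((1 - 2^-1)^+2 + (0 - Q / (2 * S))^+2) = P / S.
  apply: eq_sqrt_of; first by apply: divr_ge0; lra.
  have -> : (1 - 2^-1)^+2 + (0 - Q / (2 * S))^+2 = (S^+2 + Q^+2) / (4 * S^+2) by field; lra.
  rewrite expr_div_n SS; field; lra.
have hy : Q / (2 * S) <= r3 / 2.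
  rewrite ler_pdivrMr; last lra.
  have : Q^+2 <= (r3 * S)^+2 by rewrite exprMn r3s SS; nra.
  move=> h; have : Q <= r3 * S by apply: sq_le => //; nra.
  move=> h2; have -> : r3 / 2 * (2 * S) = r3 * S by field. done.
have ec : Num.sqrt ((2^-1 - 2^-1)^+2 + (r3 / 2 - Q / (2 * S))^+2) = r3 / 2 - Q / (2 * S).
  apply: eq_sqrt_of; first lra.
  ring.
rewrite ea eb ec.
have -> : P * (P / S) + P * (P / S) + Q * (r3 / 2 - Q / (2 * S)) = (4 * P^+2 - Q^+2) / (2 * S) + Q * r3 / 2.
  by field; lra.
rewrite -SS; field; lra.
Qed.

Lemma sup_inv (G : R[i] -> R) (l : R) : 0 < l -> (forall z, l <= G z) ->
  (exists z, G z = l) ->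
  ereal_sup [set ((G z)^-1)%:E | z in [set: R[i]]] = (l^-1)%:E.
Proof.
move=> l0 lb [z0 hz0]; apply/eqP; rewrite eq_le; apply/andP; split.
  apply: ge_ereal_sup => _ [z _ <-]; rewrite lee_fin.
  by rewrite lef_pV2 ?posrE //; apply: (lt_le_trans l0).
by apply: ereal_sup_ubound; exists z0 => //; rewrite hz0.
Qed.

Lemma Diam1 (A : set R[i]) a b :
  (forall z w, A z -> A w -> cmod (z - w) <= 1) -> A a -> A b -> cmod (a - b) = 1 ->
  Diam A = 1%E.
Proof.
move=> ub Aa Ab hab; apply/eqP; rewrite eq_le; apply/andP; split.
  apply: ge_ereal_sup => _ [z Az [w Aw <-]]; rewrite lee_fin; exact: ub.
by apply: ereal_sup_ubound; exists a => //; exists b => //; rewrite hab.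
Qed.

Lemma cmod_vert (u v : R[i]) : u \in [:: vA; vB; vC] -> v \in [:: vA; vB; vC] ->
  cmod (u - v) <= 1.
Proof.
have r3s := r3sq; have r3p := r3pos.
have e1 : Num.sqrt 1 = 1 :> R by rewrite sqrtr1.
have e0 : Num.sqrt 0 = 0 :> R by rewrite sqrtr0.
have h : forall x y : R, x^+2 + y^+2 = 1 -> Num.sqrt (x^+2 + y^+2) <= 1.
  by move=> x y ->; rewrite e1.
have h0 : forall x y : R, x = 0 -> y = 0 -> Num.sqrt (x^+2 + y^+2) <= 1.
  by move=> x y -> ->; rewrite expr0n /= addr0 e0.
rewrite !inE => /or3P [] /eqP -> /or3P [] /eqP -> ; rewrite /vA /vB /vC cmodB;
  (apply: h0; ring) || (apply: h; nra).
Qed.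

Definition gv (p : nat) (i : nat) : R[i] :=
  if (i < p)%N then vA else if (i < 2 * p)%N then vB else vC.

Lemma sum_gv (p q : nat) (z : R[i]) :
  \sum_(i < 2 * p + q) cmod (gv p i - z) = FF p%:R q%:R z.
Proof.
rewrite -(big_mkord xpredT (fun i => cmod (gv p i - z))).
rewrite (@big_cat_nat _ _ _ p) /=; [|lia|lia].
rewrite (@big_cat_nat _ _ _ (2 * p) p) /=; [|lia|lia].
rewrite (@eq_big_nat _ _ _ 0 p _ (fun=> cmod (vA - z))); last first.
  by move=> i /andP [_ hi]; rewrite /gv hi.
rewrite (@eq_big_nat _ _ _ p (2 * p) _ (fun=> cmod (vB - z))); last first.
  move=> i /andP [h1 h2]; rewrite /gv ifF ?h2 //; apply/negbTE; rewrite -leqNgt //.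
rewrite (@eq_big_nat _ _ _ (2 * p) (2 * p + q) _ (fun=> cmod (vC - z))); last first.
  move=> i /andP [h1 h2]; rewrite /gv ifF ?ifF //; apply/negbTE; rewrite -leqNgt //; lia.
rewrite !sumr_const_nat /FF !mulr_natl addrA subn0; congr (_ + _ *+ _ + _ *+ _); lia.
Qed.

Lemma gv_in p i : gv p i \in [:: vA; vB; vC].
Proof. by rewrite /gv; case: ifP => _; [|case: ifP => _]; rewrite !inE eqxx ?orbT. Qed.

Lemma mm_pos (P Q : R) : 0 < P -> 0 <= Q -> Q^+2 <= 3 * P^+2 -> 0 < mm P Q.
Proof.
move=> P0 Q0 PQ; rewrite /mm.
have : 0 < Num.sqrt (4 * P^+2 - Q^+2) by rewrite sqrtr_gt0; nra.
have := r3pos; nra.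
Qed.

Lemma fin_case (n p q : nat) : (0 < p)%N -> (q ^ 2 <= 3 * p ^ 2)%N -> n = (2 * p + q)%N ->
  exists g : 'I_n -> R[i],
       Diam (range g) = 1%E /\
       ereal_sup [set ((L1norm_fin (fun i => g i - z))^-1)%:E | z in [set: R[i]]]
         = (((mm p%:R q%:R) / n%:R)^-1)%:E.
Proof.
move=> p0 pq ->.
have P0 : 0 < p%:R :> R by rewrite ltr0n.
have Q0 : 0 <= q%:R :> R by rewrite ler0n.
have PQ : (q%:R:R)^+2 <= 3 * (p%:R:R)^+2.
  by rewrite -!natrX -(natrM R 3) ler_nat.
have n0 : 0 < (2 * p + q)%:R :> R by rewrite ltr0n; lia.
exists (fun i => gv p i); split.
  apply: (@Diam1 _ vA vB).
  - by move=> _ _ [i _ <-] [j _ <-]; apply: cmod_vert; apply: gv_in.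
  - have h0 : (0 < 2 * p + q)%N by lia.
    by exists (Ordinal h0) => //; rewrite /gv /= p0.
  - have h0 : (p < 2 * p + q)%N by lia.
    exists (Ordinal h0) => //.
    by rewrite /gv /= ltnn ifT //; lia.
  - by rewrite /vA /vB cmodB; apply: eq_sqrt_of; [lra | ring].
apply: (@sup_inv (fun z => L1norm_fin (fun i : 'I_(2 * p + q) => gv p i - z))).
- by apply: divr_gt0 => //; apply: mm_pos.
- move=> z; rewrite /L1norm_fin sum_gv [_ / _]mulrC.
  by rewrite ler_pM2l ?invr_gt0 // ; apply: FF_lb.
- exists (2^-1 +i* (q%:R / (2 * Num.sqrt (4 * (p%:R:R)^+2 - (q%:R)^+2))))%C.
  by rewrite /L1norm_fin sum_gv FF_eq // mulrC.
Qed.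

Lemma lam_gen (P Q N W : R) : 0 < N -> 0 < mm P Q ->
  W = r3 * Num.sqrt (4 * P^+2 - Q^+2) / N ->
  (mm P Q / N)^-1 = 2 * r3 / (W + 3 * Q / N).
Proof.
move=> N0 m0 ->; have r3p := r3pos; have r3s := r3sq.
set S := Num.sqrt _.
have S0 : 0 <= S := sqrtr_ge0 _.
have -> : r3 * S / N + 3 * Q / N = (2 * r3) * (mm P Q / N).
  apply/eqP; rewrite -subr_eq0 /mm -/S.
  have -> : r3 * S / N + 3 * Q / N - 2 * r3 * ((S / 2 + Q * r3 / 2) / N) = Q * (3 - r3^+2) / N.
    by field; lra.
  by rewrite r3s subrr mulr0 mul0r.
by field; lra.
Qed.

Lemma Wid (P Q N X : R) : 0 < N -> 0 <= 4 * P^+2 - Q^+2 ->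
  X = 3 * (4 * P^+2 - Q^+2) / N^+2 ->
  Num.sqrt X = r3 * Num.sqrt (4 * P^+2 - Q^+2) / N.
Proof.
move=> N0 h ->; apply: eq_sqrt_of.
  by apply: divr_ge0; [apply: mulr_ge0; [exact: ltW r3pos|exact: sqrtr_ge0]|lra].
by rewrite expr_div_n exprMn r3sq sqr_sqrtr.
Qed.

Lemma lam_cases (n : nat) : (1 < n)%N -> exists p q : nat,
  [/\ (0 < p)%N, (q ^ 2 <= 3 * p ^ 2)%N, n = (2 * p + q)%N &
      ((mm p%:R q%:R) / n%:R)^-1 = LambdaT_fin n :> R].
Proof.
move=> n1; rewrite /LambdaT_fin /=.
have r3p := r3pos; have r3s := r3sq.
case: (eqVneq n 2) => [->|n2].
  exists 1%N, 0%N; split => //=.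
  rewrite /mm; have -> : Num.sqrt (4 * (1%:R:R)^+2 - (0%:R)^+2) = 2.
    by apply: eq_sqrt_of; [lra|rewrite /=; ring].
  by rewrite /=; field.
case: (eqVneq n 4) => [->|n4].
  exists 2%N, 0%N; split => //=.
  rewrite /mm; have -> : Num.sqrt (4 * (2%:R:R)^+2 - (0%:R)^+2) = 4.
    by apply: eq_sqrt_of; [lra|rewrite /=; ring].
  by rewrite /=; field.
rewrite /=.
have hn := divn_eq n 3.
set k := (n %/ 3)%N in hn *.
set K : R := k%:R.
have K0 : 0 <= K by rewrite ler0n.
have [r0|[r1|r2]] : (n %% 3 = 0 \/ n %% 3 = 1 \/ n %% 3 = 2)%N by lia.
- rewrite r0 /=; exists k, k; split; [lia|lia|lia|].
  have hN : n%:R = 3 * K :> R by rewrite hn r0 addn0 natrM mulrC.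
  have Kp : 0 < K by rewrite ltr0n; lia.
  rewrite hN /mm -/K; clearbody K.
  have -> : Num.sqrt (4 * K^+2 - K^+2) = r3 * K.
    by apply: eq_sqrt_of; [nra|rewrite exprMn r3s; ring].
  apply/eqP; rewrite -subr_eq0.
  have -> : ((r3 * K / 2 + K * r3 / 2) / (3 * K))^-1 - r3 = (3 - r3^+2) / r3.
    by field; apply/and3P; split; apply: lt0r_neq0; nra.
  by rewrite r3s subrr mul0r.
- rewrite r1 /=; exists k, k.+1; split; [lia|nia|lia|].
  have hN : n%:R = 3 * K + 1 :> R by rewrite hn r1 natrD natrM mulrC.
  have K2 : 2 <= K by rewrite (ler_nat R 2); lia.
  have hQ : k.+1%:R = K + 1 :> R by rewrite -addn1 natrD.
  rewrite hN hQ -/K; clearbody K; rewrite (@lam_gen _ _ _ (Num.sqrt ((3 * K - 3) / (3 * K + 1)))); last first.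
  + apply: Wid; [lra|nra|field; lra].
  + apply: mm_pos; nra.
  + lra.
  + congr (_ / (_ + _)); field; lra.
- rewrite r2 /=; exists k.+1, k; split; [lia|nia|lia|].
  have hN : n%:R = 3 * K + 2 :> R by rewrite hn r2 natrD natrM mulrC.
  have hQ : k.+1%:R = K + 1 :> R by rewrite -addn1 natrD.
  rewrite hN hQ -/K; clearbody K; rewrite (@lam_gen _ _ _ (Num.sqrt ((3 * K + 6) / (3 * K + 2)))); last first.
  + apply: Wid; [lra|nra|field; lra].
  + apply: mm_pos; nra.
  + lra.
  + congr (_ / (_ + _)); field; lra.
Qed.

Definition ginf (x : R) : R[i] :=
  if x < 3^-1 then vA else if x < 2 / 3 then vB else vC.

Lemma ginf_in x : ginf x \in [:: vA; vB; vC].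
Proof. by rewrite /ginf; case: ifP => _; [|case: ifP => _]; rewrite !inE eqxx ?orbT. Qed.

Lemma meas_ginf (F : R[i] -> R) : measurable_fun Omega_inf (fun x => F (ginf x)).
Proof.
have -> : (fun x => F (ginf x)) =
  (fun x => if x < 3^-1 then F vA else if x < 2 / 3 then F vB else F vC).
  by apply: funext => x; rewrite /ginf; case: ifP => _ //; case: ifP.
apply: (measurable_funS measurableT) => //.
apply: measurable_fun_ifT; [|exact: measurable_cst|].
  by apply: measurable_realfun.measurable_fun_ltr; [exact: measurable_id|exact: measurable_cst].
apply: measurable_fun_ifT; [|exact: measurable_cst|exact: measurable_cst].
by apply: measurable_realfun.measurable_fun_ltr; [exact: measurable_id|exact: measurable_cst].
Qed.

Lemma ginf_Linf : in_Linf ginf.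
Proof.
split; first by split; apply: meas_ginf.
exists 1; apply: aeW => x _.
have := @cmod_vert (ginf x) vA (ginf_in x) ltac:(by rewrite inE eqxx).
by rewrite /vA; case: (ginf x) => a b; rewrite /cmod /= !subr0.
Qed.

Lemma Om_split : Omega_inf = `[0, 3^-1[ `|` (`[3^-1, 2/3[ `|` `[2/3, 1]) :> set R.
Proof.
rewrite /Omega_inf; apply/seteqP; split => x /=; rewrite !in_itv /=.
  move=> /andP [h1 h2].
  case: (ltP x 3^-1) => h3; first by left; apply/andP; split; lra.
  right; case: (ltP x (2/3)) => h4; first by left; apply/andP; split; lra.
  by right; apply/andP; split; lra.
case=> [/andP [h1 h2]|[] /andP [h1 h2]]; apply/andP; split; lra.
Qed.

Lemma disj1 : [disjoint (`[0, 3^-1[ : set R) & (`[3^-1, 2/3[ `|` `[2/3, 1])].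
Proof.
apply/disj_setPS => x [] /=; rewrite !in_itv /= => /andP [h1 h2] [] /andP [h3 h4]; lra.
Qed.

Lemma disj2 : [disjoint (`[3^-1, 2/3[ : set R) & `[2/3, 1]].
Proof.
apply/disj_setPS => x [] /=; rewrite !in_itv /= => /andP [h1 h2] /andP [h3 h4]; lra.
Qed.

Lemma int_const_on (D : set R) (f : R -> R) (c : R) : measurable D ->
  (forall x, D x -> f x = c) ->
  (\int[@lebesgue_measure R]_(x in D) (f x)%:E = c%:E * lebesgue_measure D)%E.
Proof.
move=> mD h; rewrite (eq_integral (fun _ => c%:E)); first by rewrite integral_cst.
by move=> x; rewrite inE => /h ->.
Qed.

Lemma L1_ginf z : L1norm_inf (fun x => ginf x - z) = ((FF 1 1 z) / 3)%:E.
Proof.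
have mO : measurable (Omega_inf : set R) by exact: measurable_itv.
have mf : forall D, D `<=` Omega_inf -> measurable D ->
    measurable_fun D (fun x => cmod (ginf x - z)).
  move=> D DO mD.
  exact: (measurable_funS mO DO (meas_ginf (fun v => cmod (v - z)))).
have m1 : measurable (`[0, 3^-1[ : set R) by exact: measurable_itv.
have m2 : measurable (`[3^-1, 2/3[ : set R) by exact: measurable_itv.
have m3 : measurable (`[2/3, 1] : set R) by exact: measurable_itv.
have m23 : measurable (`[3^-1, 2/3[ `|` `[2/3, 1] : set R) by apply: measurableU.
have m123 : measurable (`[0, 3^-1[ `|` (`[3^-1, 2/3[ `|` `[2/3, 1]) : set R) by apply: measurableU.
have d1 := disj1; have d2 := disj2.
rewrite /L1norm_inf Om_split integral_setU //; last first.
  apply/measurable_realfun.measurable_EFinP; apply: mf => //.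
  by rewrite [X in _ `<=` X]Om_split.
rewrite integral_setU //; last first.
  apply/measurable_realfun.measurable_EFinP; apply: mf => //.
  by rewrite Om_split => x hx; right.
rewrite (@int_const_on _ _ (cmod (vA - z))) //; last first.
  by move=> x /=; rewrite in_itv /= => /andP [_ h]; rewrite /ginf h.
rewrite (@int_const_on _ _ (cmod (vB - z))) //; last first.
  move=> x /=; rewrite in_itv /= => /andP [h1 h]; rewrite /ginf h ifF //.
  by apply/negbTE; rewrite -leNgt.
rewrite (@int_const_on _ _ (cmod (vC - z))) //; last first.
  move=> x /=; rewrite in_itv /= => /andP [h1 h]; rewrite /ginf !ifF //.
  + by apply/negbTE; rewrite -leNgt.
  + apply/negbTE; rewrite -leNgt; lra.
rewrite !lebesgue_measure_itv /= !lte_fin ifT; last lra.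
rewrite ifT; last lra.
rewrite ifT; last lra.
rewrite -!EFinB -!EFinM -!EFinD /FF; congr EFin; by field.
Qed.

Lemma cmod_gt0 (w : R[i]) : w != 0 -> 0 < cmod w.
Proof.
case: w => a b hw; rewrite /cmod /= sqrtr_gt0.
have [a0|a0] := eqVneq a 0.
  have [b0|b0] := eqVneq b 0.
    by move: hw; rewrite a0 b0 eqxx.
  have : 0 < b^+2 by rewrite lt0r sqr_ge0 andbT sqrf_eq0.
  have := sqr_ge0 a; lra.
have : 0 < a^+2 by rewrite lt0r sqr_ge0 andbT sqrf_eq0.
have := sqr_ge0 b; lra.
Qed.

Lemma ess_sub z : ess_range ginf z -> z \in [:: vA; vB; vC].
Proof.
move=> hz; case: (boolP (z \in [:: vA; vB; vC])) => // hn; exfalso.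
move: hn; rewrite !inE !negb_or => /and3P [hA hB hC].
have pos : forall v, z != v -> 0 < cmod (v - z).
  by move=> v hv; apply: cmod_gt0; rewrite subr_eq0 eq_sym.
set e := Num.min (cmod (vA - z)) (Num.min (cmod (vB - z)) (cmod (vC - z))).
have e0 : 0 < e by rewrite !lt_min !pos.
have := hz e e0.
have -> : [set x | Omega_inf x /\ cmod (ginf x - z) < e] = set0.
  apply/seteqP; split => x //= [_].
  have := ginf_in x; rewrite !inE => /or3P [] /eqP ->; rewrite /e !lt_min;
    by rewrite ltxx ?andbF.
by rewrite measure0 ltxx.
Qed.

Lemma ess_mem (v : R[i]) (a b : R) : 0 <= a -> a < b -> b <= 1 ->
  (forall x, a <= x -> x < b -> ginf x = v) -> ess_range ginf v.
Proof.
move=> a0 ab b1 hv e e0.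
have mO : measurable (Omega_inf : set R) by exact: measurable_itv.
have mS := meas_ginf (fun w => cmod (w - v)) mO _ (measurable_itv `]-oo, e[).
have -> : [set x | Omega_inf x /\ cmod (ginf x - v) < e] =
    Omega_inf `&` (fun x => cmod (ginf x - v)) @^-1` `]-oo, e[.
  by apply/seteqP; split => x /= [h1 h2]; split => //; move: h2; rewrite in_itv.
have mI : measurable (`[a, b[ : set R) by exact: measurable_itv.
have sub : `[a, b[ `<=` Omega_inf `&` (fun x => cmod (ginf x - v)) @^-1` `]-oo, e[.
  move=> x /=; rewrite !in_itv /= => /andP [h1 h2]; split.
    by rewrite /Omega_inf /= in_itv /=; apply/andP; split; lra.
  by rewrite hv // subrr /cmod /= expr0n /= addr0 sqrtr0.
have := le_measure lebesgue_measure (mem_set mI) (mem_set mS) sub.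
apply: lt_le_trans.
have hl : lebesgue_measure (`[a, b[ : set R) = (b - a)%:E.
  by rewrite lebesgue_measure_itv /= lte_fin ab -EFinB.
by move: hl => /= ->; rewrite lte_fin subr_gt0.
Qed.

Lemma Diam_ginf : Diam (ess_range ginf) = 1%E.
Proof.
apply: (@Diam1 _ vA vB).
- by move=> z w /ess_sub hz /ess_sub hw; apply: cmod_vert.
- apply: (@ess_mem _ 0 3^-1); [lra|lra|lra|].
  by move=> x _ h; rewrite /ginf h.
- apply: (@ess_mem _ 3^-1 (2/3)); [lra|lra|lra|].
  by move=> x h1 h; rewrite /ginf h ifF //; apply/negbTE; rewrite -leNgt.
- by rewrite /vA /vB cmodB; apply: eq_sqrt_of; [lra | ring].
Qed.

Lemma sup_ginf :
  ereal_sup [set ((fine (L1norm_inf (fun x => ginf x - z)))^-1)%:E | z in [set: R[i]]]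
         = (LambdaT_inf : R)%:E.
Proof.
have r3p := r3pos; have r3s := r3sq.
have h1 : (1:R)^+2 <= 3 * 1^+2 by lra.
have -> : (LambdaT_inf : R) = (mm 1 1 / 3)^-1.
  rewrite /mm /LambdaT_inf -/r3.
  have -> : Num.sqrt (4 * (1:R)^+2 - 1^+2) = r3 by rewrite /r3; congr Num.sqrt; ring.
  apply/eqP; rewrite -subr_eq0.
  have -> : r3 - ((r3 / 2 + 1 * r3 / 2) / 3)^-1 = (r3^+2 - 3) / r3 by field; lra.
  by rewrite r3s subrr mul0r.
apply: (@sup_inv (fun z => fine (L1norm_inf (fun x => ginf x - z)))).
- by apply: divr_gt0; [apply: mm_pos; lra|lra].
- move=> z; rewrite L1_ginf /=; rewrite ler_pM2r; [apply: FF_lb; lra|lra].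
- exists (2^-1 +i* (1 / (2 * Num.sqrt (4 * 1^+2 - 1^+2))))%C.
  by rewrite L1_ginf /= FF_eq //; lra.
Qed.
End Core.

Theorem lemmaA2 (R : realType) :
  (forall n : nat, (1 < n)%N ->
     exists g : 'I_n -> R[i],
       Diam (range g) = 1%E /\
       ereal_sup [set ((L1norm_fin (fun i => g i - z))^-1)%:E | z in [set: R[i]]]
         = (LambdaT_fin n : R)%:E) /\
  (exists g : R -> R[i],
       in_Linf g /\
       Diam (ess_range g) = 1%E /\
       ereal_sup [set ((fine (L1norm_inf (fun x => g x - z)))^-1)%:E | z in [set: R[i]]]
         = (LambdaT_inf : R)%:E).
Proof.
split.
  move=> n n1; have [p [q [p0 pq hn hl]]] := @lam_cases R n n1.
  have [g [hd hs]] := @fin_case R n p q p0 pq hn.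
  by exists g; split => //; rewrite hs hl.
exists (@ginf R); split; first exact: ginf_Linf.
by split; [exact: Diam_ginf | exact: sup_ginf].
Qed.
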